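(* Let $A\in\mathbb R^{n\times n}$ be symmetric, $b\in\mathbb R^n$, $-\infty<\alpha<\beta<+\infty$. Then the two-sided trust region subproblem \[ ({\rm TTRS})\quad \min_x\ \tfrac12x^TAx+b^Tx\quad\text{s.t.}\quad \alpha\le x^Tx\le\beta \] is equivalent to \[ ({\rm CTTRS})\quad \min_{x,t}\ \tfrac12x^T(A-\lambda_{\min}(A)I)x+b^Tx+\tfrac12\lambda_{\min}(A)t\quad\text{s.t.}\quad \alpha\le t\le\beta,\quad \left\|\begin{pmatrix}x\\ \frac{t-1}{2}\end{pmatrix}\right\|\le\frac{t+1}{2}, \] in the sense that $x^*$ globally solves (TTRS) if and only if $(x^*,t^* ):=(x^*,x^{*T}x^* )$ globally solves (CTTRS).
   Context: $\lambda_{\min}(A)$ is the smallest eigenvalue of $A$; $\|\cdot\|$ is the Euclidean norm. *)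

(* Defs.v *)
From HB Require Import structures.
From mathcomp Require Import all_boot all_order all_algebra.
From mathcomp Require Import reals.
Set Implicit Arguments. Unset Strict Implicit. Unset Printing Implicit Defensive.
Import Order.TTheory GRing.Theory Num.Theory.
Local Open Scope ring_scope.

Definition is_lambda_min (R : realType) (n : nat) (A : 'M[R]_n) (l : R) : Prop :=
  eigenvalue A l /\ (forall m : R, eigenvalue A m -> l <= m).

Definition stack_norm (R : realType) (n : nat) (x : 'cV[R]_n) (s : R) : R :=
  Num.sqrt (\sum_(i < n) (x i 0) ^+ 2 + s ^+ 2).

Definition qform (R : realType) (n : nat) (M : 'M[R]_n) (x : 'cV[R]_n) : R :=
  (x^T *m M *m x) 0 0.
Definition dotv (R : realType) (n : nat) (b x : 'cV[R]_n) : R := (b^T *m x) 0 0.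

Definition ttrs_obj (R : realType) (n : nat) (A : 'M[R]_n) (b x : 'cV[R]_n) : R :=
  2^-1 * qform A x + dotv b x.
Definition ttrs_feas (R : realType) (n : nat) (alpha beta : R) (x : 'cV[R]_n) : Prop :=
  alpha <= dotv x x <= beta.
Definition ttrs_global_sol (R : realType) (n : nat) (A : 'M[R]_n) (b : 'cV[R]_n)
    (alpha beta : R) (xs : 'cV[R]_n) : Prop :=
  ttrs_feas alpha beta xs /\
  forall x, ttrs_feas alpha beta x -> ttrs_obj A b xs <= ttrs_obj A b x.

(* CTTRS, with lam = lambda_min(A) *)
Definition cttrs_obj (R : realType) (n : nat) (A : 'M[R]_n) (b : 'cV[R]_n) (lam : R)
    (x : 'cV[R]_n) (t : R) : R :=
  2^-1 * qform (A - lam%:M) x + dotv b x + 2^-1 * lam * t.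
Definition cttrs_feas (R : realType) (n : nat) (alpha beta : R) (x : 'cV[R]_n) (t : R)
    : Prop :=
  alpha <= t <= beta /\ stack_norm x ((t - 1) / 2) <= (t + 1) / 2.
Definition cttrs_global_sol (R : realType) (n : nat) (A : 'M[R]_n) (b : 'cV[R]_n)
    (lam alpha beta : R) (xs : 'cV[R]_n) (ts : R) : Prop :=
  cttrs_feas alpha beta xs ts /\
  forall x t, cttrs_feas alpha beta x t ->
    cttrs_obj A b lam xs ts <= cttrs_obj A b lam x t.

(* Main.v *)
Require Import Defs.
From HB Require Import structures.
From mathcomp Require Import all_boot all_order all_algebra.
From mathcomp Require Import reals.
From mathcomp Require Import ring lra.
Import Order.TTheory GRing.Theory Num.Theory.
Local Open Scope ring_scope.

Set Implicit Arguments. Unset Strict Implicit.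
Section H.
Variables (R : realType) (n : nat).
Implicit Types (x y z : 'cV[R]_n).

Lemma dotvE x y : dotv x y = \sum_i x i 0 * y i 0.
Proof. by rewrite /dotv !mxE; apply: eq_bigr => i _; rewrite mxE. Qed.

Lemma dotvC x y : dotv x y = dotv y x.
Proof. by rewrite !dotvE; apply: eq_bigr => i _; rewrite mulrC. Qed.

Lemma dotvDr x y z : dotv x (y + z) = dotv x y + dotv x z.
Proof. by rewrite /dotv mulmxDr mxE. Qed.

Lemma dotvZr x a y : dotv x (a *: y) = a * dotv x y.
Proof. by rewrite /dotv -scalemxAr mxE. Qed.

Lemma dotvDl x y z : dotv (y + z) x = dotv y x + dotv z x.
Proof. by rewrite dotvC dotvDr !(dotvC x). Qed.

Lemma dotvZl x a y : dotv (a *: y) x = a * dotv y x.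
Proof. by rewrite dotvC dotvZr dotvC. Qed.

Lemma dotv_ge0 x : 0 <= dotv x x.
Proof. by rewrite dotvE; apply: sumr_ge0 => i _; rewrite -expr2 sqr_ge0. Qed.

Lemma qformE (M : 'M[R]_n) x : qform M x = dotv x (M *m x).
Proof. by rewrite /qform /dotv mulmxA. Qed.

Lemma dotv_trmx (M : 'M[R]_n) x y : dotv x (M *m y) = dotv (M^T *m x) y.
Proof. by rewrite /dotv trmx_mul trmxK mulmxA. Qed.

Lemma qform_shift (A : 'M[R]_n) lam x :
  qform (A - lam%:M) x = qform A x - lam * dotv x x.
Proof. by rewrite !qformE mulmxBl mul_scalar_mx dotvDr -scaleNr dotvZr mulNr. Qed.

Lemma stack_normP x t :
  (stack_norm x ((t - 1) / 2) <= (t + 1) / 2) <-> dotv x x <= t.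
Proof.
rewrite /stack_norm.
have -> : \sum_(i < n) x i 0 ^+ 2 = dotv x x.
  by rewrite dotvE; apply: eq_bigr => i _; rewrite expr2.
set y := dotv x x + _.
have y0 : 0 <= y by rewrite /y addr_ge0 ?dotv_ge0 ?sqr_ge0.
have hs := sqr_sqrtr y0; have hs0 := sqrtr_ge0 y.
have hx := dotv_ge0 x.
move: hs hs0; set r := Num.sqrt y => hs hs0.
have ey : y = dotv x x + ((t - 1) / 2) ^+ 2 by [].
split=> h.
- have : r ^+ 2 <= ((t + 1) / 2) ^+ 2 by nra.
  rewrite hs ey; nra.
- have : y <= ((t + 1) / 2) ^+ 2 by rewrite ey; nra.
  rewrite -hs; nra.
Qed.

End H.

Theorem corollary6 (R : realType) (n : nat) (A : 'M[R]_n) (b : 'cV[R]_n)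
    (alpha beta lam : R) :
  A^T = A -> alpha < beta -> is_lambda_min A lam ->
  forall xs : 'cV[R]_n,
    ttrs_global_sol A b alpha beta xs <->
    cttrs_global_sol A b lam alpha beta xs (dotv xs xs).
Proof.
move=> AT _ [/eigenvalueP [v vA v0] _] xs.
have diag : forall x, cttrs_obj A b lam x (dotv x x) = ttrs_obj A b x.
  by move=> x; rewrite /cttrs_obj /ttrs_obj qform_shift; ring.
split.
- case=> [fxs H]; split.
    by split => //; apply/stack_normP.
  move=> x t [tab /stack_normP hxt].
  have [w [Aw [wpos bw]]] : exists w : 'cV[R]_n,
      A *m w = lam *: w /\ 0 < dotv w w /\ dotv b w <= 0.
    set u := v^T.
    have Au : A *m u = lam *: u.
      by rewrite -[in LHS]AT -trmx_mul vA linearZ.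
    have upos : 0 < dotv u u.
      case: (pickP (fun i => u i 0 != 0)) => [i ui|hz]; last first.
        case/eqP: v0; apply/matrixP => i j.
        rewrite ord1; have := hz j; rewrite /= /u mxE => /negbFE/eqP ->.
        by rewrite mxE.
      rewrite dotvE (bigD1 i) //=.
      apply: ltr_pwDl; last by apply: sumr_ge0 => k _; rewrite -expr2 sqr_ge0.
      by rewrite -expr2 exprn_even_gt0.
    case: (lerP (dotv b u) 0) => hb.
      by exists u.
    exists (- u); split; first by rewrite mulmxN Au scalerN.
    have e1 : - u = (-1) *: u by rewrite scaleN1r.
    rewrite e1 dotvZl dotvZr dotvZr; split; nra.
  set p := dotv x w; set q := dotv w w; set d := t - dotv x x.
  have d0 : 0 <= d by rewrite /d subr_ge0.
  have pqd : 0 <= p ^+ 2 + q * d by rewrite addr_ge0 ?sqr_ge0 ?mulr_ge0 // ltW.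
  have hr := sqr_sqrtr pqd; have hr0 := sqrtr_ge0 (p ^+ 2 + q * d).
  move: hr hr0; set r := Num.sqrt _ => hr hr0.
  have qd0 : 0 <= q * d by rewrite mulr_ge0 // ltW.
  have rp : p <= r.
    have h2 : p ^+ 2 <= r ^+ 2 by rewrite hr; lra.
    nra.
  set s := (r - p) / q.
  have qs : q * s = r - p by rewrite /s mulrC -mulrA mulVf ?mulr1 // gt_eqF.
  have s0 : 0 <= s by rewrite /s divr_ge0 ?subr_ge0 // ltW.
  have ht : q * s ^+ 2 + 2 * p * s = d.
    apply: (mulfI (lt0r_neq0 wpos)).
    have -> : q * (q * s ^+ 2 + 2 * p * s) = (q * s) ^+ 2 + 2 * p * (q * s) by ring.
    rewrite qs.
    have -> : (r - p) ^+ 2 + 2 * p * (r - p) = r ^+ 2 - p ^+ 2 by ring.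
    by rewrite hr addrC addKr.
  set y := x + s *: w.
  have yy : dotv y y = t.
    rewrite /y !dotvDl !dotvDr !dotvZl !dotvZr (dotvC w x) -/p -/q.
    move: ht; rewrite /d => ht; lra.
  have := H y; rewrite /ttrs_feas yy => /(_ tab).
  have fy : ttrs_obj A b y = ttrs_obj A b x + 2^-1 * lam * (2 * s * p + s ^+ 2 * q)
                             + s * dotv b w.
    rewrite /ttrs_obj !qformE /y mulmxDr -scalemxAr (_ : A *m w = lam *: w) // scalerA.
    rewrite !dotvDl !dotvDr !dotvZl !dotvZr (dotv_trmx A w x) AT (_ : A *m w = lam *: w) // dotvZl
      (dotvC w x) -/p -/q; ring.
  rewrite fy diag => hle.
  have hsb : s * dotv b w <= 0 by rewrite mulr_ge0_le0.
  have ht' : t = dotv x x + 2 * s * p + s ^+ 2 * q.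
    by move: ht; rewrite /d => ht; lra.
  rewrite /cttrs_obj qform_shift ht'; move: hle; rewrite /ttrs_obj; lra.
- case=> [[fxs _] H]; split => // x fx.
  rewrite -!diag; apply: H; split => //; exact/stack_normP.
Qed.
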